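(* Let $\gamma\in(0,1)$ and, for each $N$, let $\omega$ have law $\mathbb{P}^{(N)}$ as in the context. Then for all $\beta\ge0$ and $h\in\mathbb{R}$, $$\mathbb{E}^{(N)}\Big[\frac1N\log Z_{N,\beta,h,\omega}\Big]\xrightarrow[N\to\infty]{}F(\beta,h):=\begin{cases}0 & \text{if } h\le-\beta,\\ \frac{F(h+\beta)}{2} & \text{if } -\beta<h<\beta,\\ \frac{F(h+\beta)+F(h-\beta)}{2} & \text{if } h\ge\beta.\end{cases}$$
   Context: Let $\tau=(\tau_n)_{n\ge0}$ be a renewal process with $\tau_0=0$ and interarrival law $K(n)=L(n)n^{-(1+\alpha)}$, $n\ge1$, where $\alpha\ge0$, $L:\mathbb{N}\to(0,\infty)$ is slowly varying and $\sum_nK(n)=1$; $\delta_n=\mathbf 1_{\{n\in\tau\}}$, $E$ denotes expectation over $\tau$. For $\omega$ independent of $\tau$, $Z_{N,\beta,h,\omega}=E\big[\exp\big(\sum_{n=1}^N(\beta\omega_n+h)\delta_n\big)\delta_N\big]$. The homogeneous free energy is $F(h):=\lim_{N\to\infty}\frac1N\log E\big[\exp\big(h\sum_{n=1}^N\delta_n\big)\delta_N\big]$ (which exists, is $\ge0$, and vanishes iff $h\le0$). $\mathbb{P}^{(N)}$ is the law of the stationary Markov chain $\omega=(\omega_n)_{n\ge0}$ on $\{-1,+1\}$ with transition matrix $Q^{(N)}=\begin{pmatrix}1-N^{-\gamma}&N^{-\gamma}\\N^{-\gamma}&1-N^{-\gamma}\end{pmatrix}$ and initial distribution $(1/2,1/2)$;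 $\mathbb{E}^{(N)}$ is the corresponding expectation. *)

(* Defs.v *)
From Stdlib Require Import Reals Lra List.
Import ListNotations.
Open Scope R_scope.

Definition sumR {A : Type} (f : A -> R) (l : list A) : R :=
  fold_right (fun a s => f a + s) 0 l.

Fixpoint bool_lists (n : nat) : list (list bool) :=
  match n with
  | O => [nil]
  | S m => map (cons true) (bool_lists m) ++ map (cons false) (bool_lists m)
  end.

Definition Kren (alpha : R) (L : nat -> R) (n : nat) : R :=
  match n with
  | O => 0
  | S _ => L n * Rpower (INR n) (- (1 + alpha))
  end.

Definition slowly_varying (L : nat -> R) : Prop :=
  forall c : R, 0 < c ->
    Un_cv (fun n => L (Z.to_nat (Int_part (c * INR n))) / L n) 1.

(** A renewal configuration on {1,...,N} is a list d = [d_1; ...; d_N] of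
    booleans (d_n = true iff n is a renewal point).  [cfg_weight K 0 d] is the
    product of K over the successive gaps between renewal points (starting
    from tau_0 = 0); when d_N = true it is exactly P(delta_1..delta_N = d). *)
Fixpoint cfg_weight (K : nat -> R) (gap : nat) (d : list bool) : R :=
  match d with
  | nil => 1
  | b :: d' => if b then K (S gap) * cfg_weight K O d'
               else cfg_weight K (S gap) d'
  end.

Definition ind (b : bool) : R := if b then 1 else 0.

(** delta_n as a function of the configuration (delta_0 = 1 since tau_0 = 0). *)
Definition delta (d : list bool) (n : nat) : R :=
  match n with
  | O => 1
  | S m => ind (nth m d false)
  end.

Definition renewal_E_dN (K : nat -> R) (N : nat) (G : (nat -> R) -> R) : R :=
  sumR (fun d => cfg_weight K O d * G (delta d) * delta d N) (bool_lists N).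

Definition Zpf (K : nat -> R) (beta h : R) (omega : nat -> R) (N : nat) : R :=
  renewal_E_dN K N
    (fun dl => exp (sumR (fun n => (beta * omega n + h) * dl n) (seq 1 N))).

Definition Zhom (K : nat -> R) (h : R) (N : nat) : R :=
  renewal_E_dN K N (fun dl => exp (h * sumR dl (seq 1 N))).

Definition spin (b : bool) : R := if b then 1 else -1.

Definition flip_prob (gamma : R) (N : nat) : R := Rpower (INR N) (- gamma).

Definition Qtrans (p : R) (a b : bool) : R := if Bool.eqb a b then 1 - p else p.

Fixpoint path_weight (p : R) (b0 : bool) (l : list bool) : R :=
  match l with
  | nil => 1
  | b :: l' => Qtrans p b0 b * path_weight p b l'
  end.

Definition omega_of (b0 : bool) (l : list bool) (n : nat) : R :=
  spin (nth n (b0 :: l) false).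

(** E^{(N)}[ G(omega) ] for G depending on omega_0, ..., omega_N only:
    stationary chain, initial law (1/2,1/2), transition matrix Q^{(N)}. *)
Definition MC_E (gamma : R) (N : nat) (G : (nat -> R) -> R) : R :=
  sumR (fun b0 =>
    sumR (fun l => / 2 * path_weight (flip_prob gamma N) b0 l * G (omega_of b0 l))
         (bool_lists N))
    [true; false].

Definition F_beta_h (Fh : R -> R) (beta h : R) : R :=
  if Rle_dec h (- beta) then 0
  else if Rlt_dec h beta then Fh (h + beta) / 2
  else (Fh (h + beta) + Fh (h - beta)) / 2.

(* Main.v *)
Require Import Defs.
From Stdlib Require Import Reals Lra Lia List ZArith.
Import ListNotations.
Open Scope R_scope.

Lemma sumR_app {A} (f : A -> R) l1 l2 : sumR f (l1 ++ l2) = sumR f l1 + sumR f l2.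
Proof. induction l1; simpl; [lra|rewrite IHl1; lra]. Qed.
Lemma sumR_map {A B} (f : B -> R) (g : A -> B) l : sumR f (map g l) = sumR (fun x => f (g x)) l.
Proof. induction l; simpl; [lra|rewrite IHl; lra]. Qed.
Lemma sumR_ext_in {A} (f g : A -> R) l : (forall x, In x l -> f x = g x) -> sumR f l = sumR g l.
Proof. induction l; simpl; intros H; [lra|rewrite H, IHl; auto]. Qed.
Lemma sumR_ext {A} (f g : A -> R) l : (forall x, f x = g x) -> sumR f l = sumR g l.
Proof. intros; apply sumR_ext_in; auto. Qed.
Lemma sumR_le {A} (f g : A -> R) l : (forall x, In x l -> f x <= g x) -> sumR f l <= sumR g l.
Proof. induction l; simpl; intros H; [lra|]. assert (f a <= g a) by auto. assert (sumR f l <= sumR g l) by auto. lra. Qed.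
Lemma sumR_plus {A} (f g : A -> R) l : sumR (fun x => f x + g x) l = sumR f l + sumR g l.
Proof. induction l; simpl; [lra|rewrite IHl; lra]. Qed.
Lemma sumR_scal {A} (c : R) (f : A -> R) l : sumR (fun x => c * f x) l = c * sumR f l.
Proof. induction l; simpl; [lra|rewrite IHl; lra]. Qed.
Lemma sumR_const0 {A} (l : list A) : sumR (fun _ => 0) l = 0.
Proof. induction l; simpl; lra. Qed.
Lemma sumR_nonneg {A} (f : A -> R) l : (forall x, In x l -> 0 <= f x) -> 0 <= sumR f l.
Proof. intros H. rewrite <- (sumR_const0 l). apply sumR_le; auto. Qed.
Lemma sumR_seq_shift (f : nat -> R) a n : sumR f (seq (S a) n) = sumR (fun i => f (S i)) (seq a n).
Proof. rewrite <- seq_shift, sumR_map. reflexivity. Qed.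

Lemma bool_lists_length n d : In d (bool_lists n) -> length d = n.
Proof.
  revert d; induction n; simpl; intros d H.
  - destruct H as [<-|[]]; reflexivity.
  - apply in_app_or in H; destruct H as [H|H]; apply in_map_iff in H;
      destruct H as [d' [<- H']]; simpl; rewrite IHn; auto.
Qed.

Lemma sumR_bool_lists_S n (f : list bool -> R) :
  sumR f (bool_lists (S n)) = sumR (fun d => f (true :: d)) (bool_lists n)
                              + sumR (fun d => f (false :: d)) (bool_lists n).
Proof. simpl. rewrite sumR_app, !sumR_map. reflexivity. Qed.

Section Zc.
Variable K : nat -> R.

Fixpoint Zc (u : nat -> R) (g k n : nat) : R :=
  match n with
  | O => match g with O => 1 | S _ => 0 end
  | S n' => K (S g) * exp (u (S k)) * Zc u O (S k) n' + Zc u (S g) (S k) n'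
  end.

Fixpoint lastind (g : nat) (d : list bool) : R :=
  match d with
  | nil => match g with O => 1 | S _ => 0 end
  | b :: d' => lastind (if b then O else S g) d'
  end.

Lemma Zc_sum : forall n u g k,
  sumR (fun d => cfg_weight K g d * exp (sumR (fun i => u (k+i)%nat * delta d i) (seq 1 n)) * lastind g d)
       (bool_lists n) = Zc u g k n.
Proof.
  induction n; intros u g k.
  - simpl. rewrite exp_0. destruct g; lra.
  - rewrite sumR_bool_lists_S. simpl Zc.
    rewrite <- (IHn u O (S k)), <- (IHn u (S g) (S k)).
    rewrite <- sumR_scal. f_equal.
    + apply sumR_ext; intros d. simpl cfg_weight. simpl lastind.
      simpl seq. simpl sumR. rewrite sumR_seq_shift. rewrite exp_plus.
      replace (sumR (fun i : nat => u (k + S i)%nat * delta (true :: d) (S i)) (seq 1 n))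
        with (sumR (fun i : nat => u (S (k + i))%nat * delta d i) (seq 1 n)).
      * change (delta (true :: d) 1) with 1. rewrite Nat.add_1_r, Rmult_1_r. ring.
      * apply sumR_ext_in; intros i Hi. apply in_seq in Hi.
        replace (k + S i)%nat with (S (k + i))%nat by lia.
        destruct i; [lia|]. reflexivity.
    + apply sumR_ext; intros d. simpl cfg_weight. simpl lastind.
      simpl seq. simpl sumR. rewrite sumR_seq_shift. rewrite exp_plus.
      replace (sumR (fun i : nat => u (k + S i)%nat * delta (false :: d) (S i)) (seq 1 n))
        with (sumR (fun i : nat => u (S (k + i))%nat * delta d i) (seq 1 n)).
      * change (delta (false :: d) 1) with 0. rewrite Rmult_0_r, exp_0. ring.
      * apply sumR_ext_in; intros i Hi. apply in_seq in Hi.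
        replace (k + S i)%nat with (S (k + i))%nat by lia.
        destruct i; [lia|]. reflexivity.
Qed.

Lemma lastind_delta : forall d g, d <> nil -> lastind g d = delta d (length d).
Proof.
  induction d as [|b d IH]; intros g H; [congruence|].
  destruct d as [|b' d'].
  - simpl. destruct b; reflexivity.
  - change (lastind g (b :: b' :: d')) with (lastind (if b then O else S g) (b' :: d')).
    rewrite IH by discriminate. reflexivity.
Qed.

Lemma renewal_E_dN_Zc N u :
  renewal_E_dN K N (fun dl => exp (sumR (fun n => u n * dl n) (seq 1 N))) = Zc u O O N.
Proof.
  rewrite <- Zc_sum. unfold renewal_E_dN. apply sumR_ext_in; intros d Hd.
  f_equal. destruct N.
  - simpl in Hd. destruct Hd as [<-|[]]. reflexivity.
  - apply bool_lists_length in Hd. rewrite lastind_delta.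
    + rewrite Hd; reflexivity.
    + intro; subst; discriminate.
Qed.

Lemma Zpf_Zc beta h omega N :
  Zpf K beta h omega N = Zc (fun n => beta * omega n + h) O O N.
Proof. unfold Zpf. apply renewal_E_dN_Zc. Qed.

Lemma Zhom_Zc x N : Zhom K x N = Zc (fun _ => x) O O N.
Proof.
  unfold Zhom. rewrite <- renewal_E_dN_Zc. unfold renewal_E_dN.
  apply sumR_ext; intro d. f_equal. f_equal. f_equal. rewrite sumR_scal. reflexivity.
Qed.
End Zc.

Section ZcProps.
Variable K : nat -> R.
Hypothesis K_nonneg : forall n, 0 <= K n.
Hypothesis K_le1 : forall n, K n <= 1.
Hypothesis K1_pos : 0 < K 1.

Lemma Zc_nonneg : forall n u g k, 0 <= Zc K u g k n.
Proof.
  induction n; intros; simpl.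
  - destruct g; lra.
  - assert (0 <= K (S g) * exp (u (S k))) by (apply Rmult_le_pos; [auto|left; apply exp_pos]).
    assert (0 <= Zc K u 0 (S k) n) by auto. assert (0 <= Zc K u (S g) (S k) n) by auto.
    apply Rplus_le_le_0_compat; [apply Rmult_le_pos|]; auto.
Qed.

Lemma Zc_ext : forall n u v g k k', (forall i, (1 <= i <= n)%nat -> u (k+i)%nat = v (k'+i)%nat) ->
  Zc K u g k n = Zc K v g k' n.
Proof.
  induction n; intros u v g k k' H; simpl; [reflexivity|].
  rewrite (IHn u v 0%nat (S k) (S k')), (IHn u v (S g) (S k) (S k')).
  - pose proof (H 1%nat ltac:(lia)) as H1. rewrite Nat.add_1_r, Nat.add_1_r in H1. rewrite H1. reflexivity.
  - intros i Hi. replace (S k + i)%nat with (k + S i)%nat by lia.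
    replace (S k' + i)%nat with (k' + S i)%nat by lia. apply H; lia.
  - intros i Hi. replace (S k + i)%nat with (k + S i)%nat by lia.
    replace (S k' + i)%nat with (k' + S i)%nat by lia. apply H; lia.
Qed.

Lemma Zc_concat : forall m n u g k, Zc K u g k m * Zc K u 0 (k+m) n <= Zc K u g k (m+n).
Proof.
  induction m; intros n u g k.
  - simpl. rewrite Nat.add_0_r. destruct g; [lra|]. rewrite Rmult_0_l. apply Zc_nonneg.
  - simpl. replace (k + S m)%nat with (S k + m)%nat by lia.
    pose proof (IHm n u 0%nat (S k)). pose proof (IHm n u (S g) (S k)).
    assert (0 <= K (S g) * exp (u (S k))) by (apply Rmult_le_pos; [auto|left; apply exp_pos]).
    rewrite Rmult_plus_distr_r; apply Rplus_le_compat; [rewrite Rmult_assoc; apply Rmult_le_compat_l; auto|auto].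
Qed.

Lemma Zc_step1 : forall n u k, K 1 * exp (u (S k)) * Zc K u 0 (S k) n <= Zc K u 0 k (S n).
Proof. intros. simpl. pose proof (Zc_nonneg n u 1 (S k)). lra. Qed.

Lemma Zc_pos : forall n u k, 0 < Zc K u 0 k n.
Proof.
  induction n; intros; [simpl; lra|].
  eapply Rlt_le_trans; [|apply Zc_step1].
  apply Rmult_lt_0_compat; [apply Rmult_lt_0_compat; [auto|apply exp_pos]|auto].
Qed.

Lemma Zc_single : forall n u g k, K (S g + n) * exp (u (k + S n)%nat) <= Zc K u g k (S n).
Proof.
  induction n; intros u g k.
  - simpl. rewrite Nat.add_0_r, Nat.add_1_r. rewrite Rmult_1_r. lra.
  - change (Zc K u g k (S (S n))) with
      (K (S g) * exp (u (S k)) * Zc K u 0 (S k) (S n) + Zc K u (S g) (S k) (S n)).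
    pose proof (IHn u (S g) (S k)).
    replace (S (S g) + n)%nat with (S g + S n)%nat in H by lia.
    replace (S k + S n)%nat with (k + S (S n))%nat in H by lia.
    assert (0 <= K (S g) * exp (u (S k)) * Zc K u 0 (S k) (S n)).
    { apply Rmult_le_pos; [apply Rmult_le_pos; [auto|left; apply exp_pos]|apply Zc_nonneg]. }
    lra.
Qed.

Fixpoint Tz (u : nat -> R) (a n : nat) : R :=
  match n with
  | O => 0
  | S n' => exp (u (S a)) * Zc K u 0 (S a) n' + Tz u (S a) n'
  end.

Fixpoint S1 (u : nat -> R) (g k m : nat) : R :=
  match m with
  | O => 1
  | S m' => S1 u g k m' + Zc K u g k m
  end.

Lemma S1_step : forall m u g k,
  S1 u g k (S m) = K (S g) * exp (u (S k)) * S1 u 0 (S k) m + S1 u (S g) (S k) m.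
Proof.
  induction m; intros.
  - simpl. lra.
  - change (S1 u g k (S (S m))) with (S1 u g k (S m) + Zc K u g k (S (S m))).
    rewrite IHm. simpl. ring.
Qed.

Lemma Zc_le_Tz : forall n u g k, Zc K u g k (S n) <= Tz u k (S n).
Proof.
  induction n; intros u g k.
  - simpl. rewrite !Rmult_1_r, Rplus_0_r, Rplus_0_r.
    pose proof (exp_pos (u (S k))). pose proof (K_le1 (S g)). rewrite <- (Rmult_1_l (exp (u (S k)))) at 2. apply Rmult_le_compat_r; lra.
  - change (Zc K u g k (S (S n))) with
      (K (S g) * exp (u (S k)) * Zc K u 0 (S k) (S n) + Zc K u (S g) (S k) (S n)).
    change (Tz u k (S (S n))) with (exp (u (S k)) * Zc K u 0 (S k) (S n) + Tz u (S k) (S n)).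
    pose proof (IHn u (S g) (S k)). pose proof (Zc_nonneg (S n) u 0 (S k)).
    pose proof (exp_pos (u (S k))). pose proof (K_le1 (S g)).
    assert (K (S g) * exp (u (S k)) * Zc K u 0 (S k) (S n) <= exp (u (S k)) * Zc K u 0 (S k) (S n)).
    { rewrite Rmult_assoc. apply Rle_trans with (1 * (exp (u (S k)) * Zc K u 0 (S k) (S n))); [|lra].
      apply Rmult_le_compat_r; [apply Rmult_le_pos; lra|auto]. }
    lra.
Qed.

Lemma Tz_nonneg : forall n u a, 0 <= Tz u a n.
Proof.
  induction n; intros; simpl; [lra|].
  pose proof (exp_pos (u (S a))). pose proof (Zc_nonneg n u 0 (S a)). pose proof (IHn u (S a)). apply Rplus_le_le_0_compat; [apply Rmult_le_pos; lra|auto].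
Qed.

Lemma S1_nonneg : forall m u g k, 0 <= S1 u g k m.
Proof. induction m; intros; [simpl; lra|]. change (S1 u g k (S m)) with (S1 u g k m + Zc K u g k (S m)). pose proof (IHm u g k). pose proof (Zc_nonneg (S m) u g k). lra. Qed.

Lemma Zc_split_upper : forall m n u g k, Zc K u g k (m + S n) <= S1 u g k m * Tz u (k + m) (S n).
Proof.
  induction m; intros n u g k.
  - simpl. rewrite Nat.add_0_r, Rmult_1_l. apply Zc_le_Tz.
  - rewrite S1_step. change (S m + S n)%nat with (S (m + S n)).
    change (Zc K u g k (S (m + S n))) with
      (K (S g) * exp (u (S k)) * Zc K u 0 (S k) (m + S n) + Zc K u (S g) (S k) (m + S n)).
    replace (k + S m)%nat with (S k + m)%nat by lia.
    pose proof (IHm n u 0%nat (S k)). pose proof (IHm n u (S g) (S k)).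
    assert (0 <= K (S g) * exp (u (S k))) by (apply Rmult_le_pos; [auto|left; apply exp_pos]).
    rewrite Rmult_plus_distr_r; apply Rplus_le_compat; [|auto].
    apply Rle_trans with (K (S g) * exp (u (S k)) * (S1 u 0 (S k) m * Tz u (S k + m) (S n))); [apply Rmult_le_compat_l; auto| right; ring].
Qed.

Lemma Tz_bound : forall n u a B C,
  (forall i, exp (u i) <= C) ->
  (forall i, (1 <= i <= n)%nat -> Zc K u 0 (a + i) (n - i) <= B) ->
  Tz u a n <= INR n * C * B.
Proof.
  induction n; intros u a B C HC HB; simpl Tz; [simpl; lra|].
  rewrite S_INR.
  assert (Hb0 : Zc K u 0 (S a) n <= B) by (pose proof (HB 1%nat ltac:(lia)); rewrite Nat.add_1_r, Nat.sub_1_r in H; exact H).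
  assert (0 <= B) by (pose proof (Zc_nonneg n u 0 (S a)); lra).
  assert (Tz u (S a) n <= INR n * C * B).
  { apply IHn; auto. intros i Hi. replace (S a + i)%nat with (a + S i)%nat by lia.
    replace (n - i)%nat with (S n - S i)%nat by lia. apply HB; lia. }
  pose proof (exp_pos (u (S a))). pose proof (HC (S a)). pose proof (Zc_nonneg n u 0 (S a)).
  assert (exp (u (S a)) * Zc K u 0 (S a) n <= C * B).
  { apply Rmult_le_compat; lra. }
  lra.
Qed.

Fixpoint Rt (g : nat) : R := match g with O => 1 | S g' => Rt g' - K g end.

Lemma Zc_le_Rt : (forall g, 0 <= Rt g) ->
  forall n u g k, (forall i, u i <= 0) -> Zc K u g k n <= Rt g.
Proof.
  intros HR. induction n; intros u g k Hu.
  - destruct g; simpl; [lra|]. apply (HR (S g)).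
  - simpl. pose proof (IHn u 0%nat (S k) Hu). pose proof (IHn u (S g) (S k) Hu).
    simpl in H. simpl in H0.
    assert (exp (u (S k)) <= 1) by (rewrite <- exp_0; destruct (Req_dec (u (S k)) 0) as [E|E];
       [rewrite E; lra|left; apply exp_increasing; pose proof (Hu (S k)); lra]).
    pose proof (exp_pos (u (S k))). pose proof (K_nonneg (S g)).
    pose proof (Zc_nonneg n u 0 (S k)).
    assert (K (S g) * exp (u (S k)) * Zc K u 0 (S k) n <= K (S g)).
    { rewrite Rmult_assoc. rewrite <- (Rmult_1_r (K (S g))) at 2. apply Rmult_le_compat_l; auto.
      rewrite <- (Rmult_1_r 1). apply Rmult_le_compat; lra. }
    lra.
Qed.
End ZcProps.

Lemma ln_le_mono a b : 0 < a -> a <= b -> ln a <= ln b.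
Proof. intros Ha Hab. destruct (Req_dec a b) as [->|E]; [lra|]. left; apply ln_increasing; lra. Qed.

Lemma exp_le_mono a b : a <= b -> exp a <= exp b.
Proof. intros H. destruct (Req_dec a b) as [->|E]; [lra|]. left; apply exp_increasing; lra. Qed.

Lemma cv_ge_freq u l c : Un_cv u l -> (forall N0, exists n, (N0 <= n)%nat /\ c <= u n) -> c <= l.
Proof.
  intros Hu Hf. destruct (Rle_dec c l) as [|Hn]; auto. exfalso.
  destruct (Hu (c - l)) as [N HN]; [lra|]. destruct (Hf N) as [n [Hn1 Hn2]].
  specialize (HN n Hn1). unfold Rdist in HN. apply Rabs_def2 in HN. lra.
Qed.

Lemma cv_le_freq u l c : Un_cv u l -> (forall N0, exists n, (N0 <= n)%nat /\ u n <= c) -> l <= c.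
Proof.
  intros Hu Hf. destruct (Rle_dec l c) as [|Hn]; auto. exfalso.
  destruct (Hu (l - c)) as [N HN]; [lra|]. destruct (Hf N) as [n [Hn1 Hn2]].
  specialize (HN n Hn1). unfold Rdist in HN. apply Rabs_def2 in HN. lra.
Qed.

Lemma nat_le_pow2 j : (j <= 2 ^ j)%nat.
Proof. induction j; [simpl; lia|]. assert (2^j <> 0)%nat by (apply Nat.pow_nonzero; lia). simpl. lia. Qed.

Lemma nat_sq_le_pow2 j : (4 <= j)%nat -> (j * j <= 2 ^ j)%nat.
Proof.
  induction j; intros H; [lia|].
  destruct (Nat.eq_dec j 3) as [->|Hj]; [simpl; lia|].
  assert (j * j <= 2 ^ j)%nat by (apply IHj; lia). assert (2*j+1 <= j*j)%nat by nia. simpl. nia.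
Qed.

Section KFacts.
Variables (alpha : R) (L : nat -> R).
Hypothesis HL : forall n : nat, (1 <= n)%nat -> 0 < L n.
Hypothesis Hsum : infinite_sum (fun n => Kren alpha L (S n)) 1.

Lemma Kren_nonneg n : 0 <= Kren alpha L n.
Proof. destruct n; simpl; [lra|]. unfold Rpower. apply Rmult_le_pos; left; [apply HL; lia|apply exp_pos]. Qed.

Lemma Kren_pos n : (1 <= n)%nat -> 0 < Kren alpha L n.
Proof. intros H. destruct n; [lia|]. unfold Kren. unfold Rpower. apply Rmult_lt_0_compat; [apply HL; lia|apply exp_pos]. Qed.

Lemma Kren_1 : Kren alpha L 1 = L 1.
Proof. unfold Kren, Rpower. simpl. rewrite ln_1, Rmult_0_r, exp_0. ring. Qed.

Lemma Kren_le1 n : Kren alpha L n <= 1.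
Proof.
  destruct n; [simpl; lra|].
  apply Rle_trans with (sum_f_R0 (fun n => Kren alpha L (S n)) n).
  - destruct n; [apply Rle_refl|]. rewrite tech5. cbv beta.
    assert (0 <= sum_f_R0 (fun n => Kren alpha L (S n)) n).
    { clear - HL. induction n; [apply (Kren_nonneg 1)|]. rewrite tech5. cbv beta. pose proof (Kren_nonneg (S (S n))). lra. }
    lra.
  - apply sum_incr; [exact Hsum|]. intros; apply Kren_nonneg.
Qed.

Lemma Rt_Kren_nonneg g : 0 <= Rt (Kren alpha L) g.
Proof.
  assert (forall g, Rt (Kren alpha L) (S g) = 1 - sum_f_R0 (fun n => Kren alpha L (S n)) g).
  { induction g0; simpl; [ring|]. simpl in IHg0. rewrite IHg0. ring. }
  destruct g; [simpl; lra|]. rewrite H.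
  assert (sum_f_R0 (fun n => Kren alpha L (S n)) g <= 1).
  { apply sum_incr; [exact Hsum|]. intros; apply Kren_nonneg. }
  lra.
Qed.
End KFacts.

Section FFacts.
Variables (K : nat -> R) (Fh : R -> R).
Hypothesis K_nonneg : forall n, 0 <= K n.
Hypothesis K_le1 : forall n, K n <= 1.
Hypothesis K1_pos : 0 < K 1.
Hypothesis HRt : forall g, 0 <= Rt K g.
Hypothesis HF : forall x, Un_cv (fun N => / INR N * ln (Zc K (fun _ => x) 0 0 N)) (Fh x).

Lemma Zh_shift x g k n : Zc K (fun _ => x) g k n = Zc K (fun _ => x) g 0 n.
Proof. apply Zc_ext. reflexivity. Qed.

Lemma Zh_pos x n : 0 < Zc K (fun _ => x) 0 0 n.
Proof. apply Zc_pos; auto. Qed.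

Lemma F_nonpos x : x <= 0 -> Fh x <= 0.
Proof.
  intros Hx. apply (cv_le_freq _ _ 0 (HF x)). intros N0. exists (S N0). split; [lia|].
  assert (Zc K (fun _ => x) 0 0 (S N0) <= 1).
  { change 1 with (Rt K 0). apply Zc_le_Rt; auto. }
  assert (ln (Zc K (fun _ : nat => x) 0 0 (S N0)) <= 0).
  { rewrite <- ln_1. apply ln_le_mono; auto. apply Zh_pos. }
  assert (0 < / INR (S N0)) by (apply Rinv_0_lt_compat, lt_0_INR; lia).
  rewrite <- (Rmult_0_r (/ INR (S N0))). apply Rmult_le_compat_l; lra.
Qed.

Lemma Zh_pow x j n : (Zc K (fun _ => x) 0 0 j) ^ n <= Zc K (fun _ => x) 0 0 (j * n).
Proof.
  induction n; simpl.
  - rewrite Nat.mul_0_r. simpl. lra.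
  - replace (j * S n)%nat with (j + j * n)%nat by lia.
    eapply Rle_trans; [|apply Zc_concat; auto].
    rewrite Nat.add_0_l, (Zh_shift x 0 j). apply Rmult_le_compat_l; auto.
    left; apply Zh_pos.
Qed.

Lemma Zh_upper x j : Zc K (fun _ => x) 0 0 j <= exp (INR j * Fh x).
Proof.
  destruct j.
  - simpl. rewrite Rmult_0_l, exp_0. lra.
  - assert (Hj : 0 < INR (S j)) by (apply lt_0_INR; lia).
    assert (Fh x >= / INR (S j) * ln (Zc K (fun _ => x) 0 0 (S j))).
    { apply Rle_ge. apply (cv_ge_freq _ _ _ (HF x)). intros N0. exists (S j * S N0)%nat.
      split; [nia|].
      pose proof (Zh_pow x (S j) (S N0)).
      apply ln_le_mono in H; [|apply pow_lt, Zh_pos].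
      rewrite ln_pow in H by apply Zh_pos.
      rewrite mult_INR.
      assert (0 < INR (S N0)) by (apply lt_0_INR; lia).
      rewrite Rinv_mult.
      apply Rle_trans with (/ INR (S j) * / INR (S N0) * (INR (S N0) * ln (Zc K (fun _ : nat => x) 0 0 (S j)))).
      - right. field. lra.
      - apply Rmult_le_compat_l; [|exact H].
        apply Rmult_le_pos; left; apply Rinv_0_lt_compat; lra. }
    rewrite <- (exp_ln (Zc K (fun _ => x) 0 0 (S j))) by apply Zh_pos.
    apply exp_le_mono.
    apply Rmult_ge_compat_l with (r := INR (S j)) in H; [|lra].
    rewrite <- Rmult_assoc, Rinv_r, Rmult_1_l in H by lra. lra.
Qed.

Lemma Zh_lower_K1 x n : INR n * (ln (K 1) + x) <= ln (Zc K (fun _ => x) 0 0 n).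
Proof.
  induction n.
  - simpl. rewrite ln_1. lra.
  - pose proof (Zc_step1 K K_nonneg n (fun _ => x) 0%nat).
    rewrite (Zh_shift x 0 1 n) in H.
    apply ln_le_mono in H; [|apply Rmult_lt_0_compat; [apply Rmult_lt_0_compat; [auto|apply exp_pos]|apply Zh_pos]].
    rewrite !ln_mult in H by (try apply Rmult_lt_0_compat; auto; try apply exp_pos; apply Zh_pos).
    rewrite ln_exp in H. rewrite S_INR. lra.
Qed.

Lemma Zh_lower_eps x eps : 0 < eps -> exists E, 0 <= E /\
  forall l, INR l * (Fh x - eps) - E <= ln (Zc K (fun _ => x) 0 0 l).
Proof.
  intros He. destruct (HF x eps He) as [N0 HN].
  exists (INR N0 * Rabs (ln (K 1) + x - (Fh x - eps))). split.
  { apply Rmult_le_pos; [apply pos_INR|apply Rabs_pos]. }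
  intros l. destruct (Compare_dec.le_lt_dec N0 l) as [Hl|Hl].
  - destruct l.
    + simpl. rewrite ln_1. pose proof (pos_INR N0). pose proof (Rabs_pos (ln (K 1) + x - (Fh x - eps))).
      assert (0 <= INR N0 * Rabs (ln (K 1) + x - (Fh x - eps))) by (apply Rmult_le_pos; auto). lra.
    + specialize (HN (S l) Hl). unfold Rdist in HN. apply Rabs_def2 in HN.
      assert (0 < INR (S l)) by (apply lt_0_INR; lia).
      assert (0 <= INR N0 * Rabs (ln (K 1) + x - (Fh x - eps))) by (apply Rmult_le_pos; [apply pos_INR|apply Rabs_pos]).
      assert (INR (S l) * (Fh x - eps) <= ln (Zc K (fun _ : nat => x) 0 0 (S l))).
      { apply Rmult_le_reg_l with (/ INR (S l)); [apply Rinv_0_lt_compat; lra|].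
        rewrite <- Rmult_assoc, Rinv_l, Rmult_1_l by lra. lra. }
      lra.
  - pose proof (Zh_lower_K1 x l).
    assert (INR l <= INR N0) by (apply le_INR; lia).
    pose proof (pos_INR l).
    pose proof (Rle_abs (- (ln (K 1) + x - (Fh x - eps)))). rewrite Rabs_Ropp in H2.
    assert (INR l * (- (ln (K 1) + x - (Fh x - eps))) <= INR N0 * Rabs (ln (K 1) + x - (Fh x - eps))).
    { apply Rle_trans with (INR l * Rabs (ln (K 1) + x - (Fh x - eps))).
      - apply Rmult_le_compat_l; auto.
      - apply Rmult_le_compat_r; auto. apply Rabs_pos. }
    lra.
Qed.
End FFacts.

Section FPos.
Variables (alpha : R) (L : nat -> R) (Fh : R -> R).
Hypothesis Halpha : 0 <= alpha.
Hypothesis HL : forall n : nat, (1 <= n)%nat -> 0 < L n.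
Hypothesis Hsv : slowly_varying L.
Hypothesis HF : forall x, Un_cv (fun N => / INR N * ln (Zc (Kren alpha L) (fun _ => x) 0 0 N)) (Fh x).

Lemma L_double : exists n1, (1 <= n1)%nat /\ forall n, (n1 <= n)%nat -> L n / 2 <= L (2 * n).
Proof.
  destruct (Hsv 2 ltac:(lra) (/2) ltac:(lra)) as [N HN].
  exists (Nat.max N 1). split; [lia|]. intros n Hn.
  specialize (HN n ltac:(lia)).
  replace (2 * INR n) with (INR (2 * n)) in HN by (rewrite mult_INR; simpl; ring).
  rewrite Int_part_INR, Nat2Z.id in HN.
  unfold Rdist in HN. apply Rabs_def2 in HN.
  assert (0 < L n) by (apply HL; lia).
  assert (/ 2 <= L (2 * n) / L n) by lra.
  apply Rmult_le_compat_r with (r := L n) in H0; [|lra].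
  unfold Rdiv in H0. rewrite Rmult_assoc, Rinv_l, Rmult_1_r in H0 by lra. lra.
Qed.

Lemma L_pow2 M n1 : (n1 <= M)%nat -> (1 <= n1)%nat -> (forall n, (n1 <= n)%nat -> L n / 2 <= L (2 * n)) ->
  forall j, L M <= L (M * 2 ^ j) * 2 ^ j.
Proof.
  intros HM H1 Hd. induction j.
  - simpl. rewrite Nat.mul_1_r. lra.
  - replace (M * 2 ^ S j)%nat with (2 * (M * 2 ^ j))%nat by (simpl; lia).
    assert (n1 <= M * 2 ^ j)%nat by (assert (2^j <> 0)%nat by (apply Nat.pow_nonzero; lia); nia).
    specialize (Hd _ H). simpl pow.
    assert (0 < 2 ^ j) by (apply pow_lt; lra).
    apply Rle_trans with (L (M * 2 ^ j) * 2 ^ j); auto.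
    apply Rmult_le_compat_r with (r := 2 * 2 ^ j) in Hd; [|lra].
    lra.
Qed.

Lemma F_nonneg x : 0 <= Fh x.
Proof.
  destruct L_double as [n1 [Hn1 Hd]].
  set (M := (2 ^ n1)%nat).
  assert (HM : (n1 <= M)%nat) by apply nat_le_pow2.
  pose proof (L_pow2 M n1 HM Hn1 Hd) as HP.
  assert (HLM : 0 < L M) by (apply HL; lia).
  set (A := ln (L M) - (1 + alpha) * ln (INR M) + x).
  set (B := (2 + alpha) * ln 2).
  assert (Hln2 : 0 < ln 2) by (pose proof ln_lt_2; lra).
  assert (HB : 0 < B) by (unfold B; apply Rmult_lt_0_compat; lra).
  apply Rnot_lt_le. intro Hneg.
  set (eps := - Fh x / 2).
  assert (Heps : 0 < eps) by (unfold eps; lra).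
  assert (Fh x < - eps) by (unfold eps; lra).
  assert (- eps <= Fh x).
  2: lra.
  apply (cv_ge_freq _ _ _ (HF x)). intros N0.
  destruct (INR_unbounded ((B + Rabs A) / eps)) as [j0 Hj0].
  set (j := Nat.max (Nat.max N0 4) j0).
  exists (M * 2 ^ j)%nat.
  assert (Hpj : (1 <= 2 ^ j)%nat) by (assert (2^j <> 0)%nat by (apply Nat.pow_nonzero; lia); lia).
  assert (Hjj : (j <= 2 ^ j)%nat) by apply nat_le_pow2.
  split; [nia|].
  destruct (M * 2 ^ j)%nat as [|m] eqn:Em; [nia|].
  assert (Hn : 0 < INR (S m)) by (apply lt_0_INR; lia).
  pose proof (Zc_single (Kren alpha L) (Kren_nonneg alpha L HL) m (fun _ => x) 0 0) as Hs.
  simpl (S 0 + m)%nat in Hs.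
  assert (HK : 0 < Kren alpha L (S m)) by (apply Kren_pos; auto; lia).
  apply ln_le_mono in Hs; [|apply Rmult_lt_0_compat; [auto|apply exp_pos]].
  rewrite ln_mult, ln_exp in Hs by (auto; apply exp_pos).
  assert (HlnK : ln (Kren alpha L (S m)) = ln (L (S m)) - (1 + alpha) * ln (INR (S m))).
  { unfold Kren. rewrite ln_mult by (try apply HL; try lia; unfold Rpower; apply exp_pos).
    rewrite ln_Rpower. ring. }
  assert (HINR : INR (S m) = INR M * 2 ^ j) by (rewrite <- Em, mult_INR, pow_INR; reflexivity).
  assert (HMpos : 0 < INR M) by (apply lt_0_INR; lia).
  assert (Hlnn : ln (INR (S m)) = ln (INR M) + INR j * ln 2).
  { rewrite HINR, ln_mult, ln_pow by (try apply pow_lt; lra). reflexivity. }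
  specialize (HP j). rewrite Em in HP.
  assert (HLSm : 0 < L (S m)) by (apply HL; lia).
  apply ln_le_mono in HP; auto.
  rewrite ln_mult, ln_pow in HP by (try apply pow_lt; lra).
  assert (Hlow : A - B * INR j <= ln (Zc (Kren alpha L) (fun _ : nat => x) 0 0 (S m))).
  { unfold A, B. rewrite HlnK, Hlnn in Hs. nra. }
  assert (Hj4 : (4 <= j)%nat) by (unfold j; lia).
  assert (Hsq : INR j * INR j <= 2 ^ j).
  { rewrite <- mult_INR, <- (pow_INR 2). replace (INR 2) with 2 by (simpl; ring). apply le_INR. apply nat_sq_le_pow2; auto. }
  assert (Hjge : (B + Rabs A) / eps <= INR j).
  { left. apply Rlt_le_trans with (INR j0); [lra|]. apply le_INR. unfold j; lia. }
  assert (Hj1 : 1 <= INR j) by (replace 1 with (INR 1) by reflexivity; apply le_INR; lia).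
  assert (B + Rabs A <= eps * INR j).
  { apply Rmult_le_compat_l with (r := eps) in Hjge; [|lra]. unfold Rdiv in Hjge.
    rewrite <- Rmult_assoc, (Rmult_comm eps), Rmult_assoc, Rinv_r, Rmult_1_r in Hjge by lra. lra. }
  assert (B * INR j - A <= eps * INR (S m)).
  { pose proof (Rle_abs (- A)) as HA. rewrite Rabs_Ropp in HA.
    assert (Rabs A <= Rabs A * INR j) by (rewrite <- (Rmult_1_r (Rabs A)) at 1; apply Rmult_le_compat_l; [apply Rabs_pos|lra]).
    apply Rle_trans with ((B + Rabs A) * INR j); [rewrite Rmult_plus_distr_r; lra|].
    apply Rle_trans with (eps * INR j * INR j); [apply Rmult_le_compat_r; lra|].
    rewrite HINR.
    assert (1 <= INR M) by (replace 1 with (INR 1) by reflexivity; apply le_INR; lia).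
    rewrite Rmult_assoc. apply Rmult_le_compat_l; [lra|]. nra. }
  apply Rmult_le_reg_l with (INR (S m)); auto.
  rewrite <- Rmult_assoc, Rinv_r, Rmult_1_l by lra. nra.
Qed.
End FPos.

Definition swi (u : nat -> R) (n : nat) : R := if Req_EM_T (u (S n)) (u n) then 0 else 1.

Fixpoint run (u : nat -> R) (s m : nat) : nat :=
  match m with
  | O => O
  | S m' => match m' with
            | O => 1%nat
            | S _ => if Req_EM_T (u (S (S s))) (u (S s)) then S (run u (S s) m') else 1%nat
            end
  end.

Lemma run_bounds : forall m u s, (1 <= m)%nat -> (1 <= run u s m <= m)%nat.
Proof.
  induction m; intros u s H; [lia|]. destruct m; [simpl; lia|].
  change (run u s (S (S m))) with (if Req_EM_T (u (S (S s))) (u (S s)) then S (run u (S s) (S m)) else 1%nat).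
  destruct (Req_EM_T (u (S (S s))) (u (S s))); [|lia].
  specialize (IHm u (S s) ltac:(lia)). lia.
Qed.

Lemma run_const : forall m u s i, (1 <= i <= run u s m)%nat -> u (s + i)%nat = u (S s).
Proof.
  induction m; intros u s i H; [simpl in H; lia|]. destruct m.
  - simpl in H. replace i with 1%nat by lia. rewrite Nat.add_1_r. reflexivity.
  - change (run u s (S (S m))) with (if Req_EM_T (u (S (S s))) (u (S s)) then S (run u (S s) (S m)) else 1%nat) in H.
    destruct (Req_EM_T (u (S (S s))) (u (S s))) as [E|E]; [|replace i with 1%nat by lia; rewrite Nat.add_1_r; reflexivity].
    destruct (Nat.eq_dec i 1) as [->|Hi]; [rewrite Nat.add_1_r; reflexivity|].
    replace (s + i)%nat with (S s + (i - 1))%nat by lia.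
    rewrite IHm by lia. exact E.
Qed.

Lemma run_switch : forall m u s, (run u s m < m)%nat -> swi u (s + run u s m) = 1.
Proof.
  induction m; intros u s H; [simpl in H; lia|]. destruct m; [simpl in H; lia|].
  unfold swi. change (run u s (S (S m))) with (if Req_EM_T (u (S (S s))) (u (S s)) then S (run u (S s) (S m)) else 1%nat) in *.
  destruct (Req_EM_T (u (S (S s))) (u (S s))) as [E|E].
  - specialize (IHm u (S s) ltac:(lia)). unfold swi in IHm.
    replace (s + S (run u (S s) (S m)))%nat with (S s + run u (S s) (S m))%nat by lia. exact IHm.
  - rewrite Nat.add_1_r. destruct (Req_EM_T (u (S (S s))) (u (S s))); [contradiction|reflexivity].
Qed.

Section Bounds.
Variables (K : nat -> R) (Fh : R -> R).
Hypothesis K_nonneg : forall n, 0 <= K n.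
Hypothesis K_le1 : forall n, K n <= 1.
Hypothesis K1_pos : 0 < K 1.
Hypothesis HF0 : forall x, 0 <= Fh x.

Definition SF (u : nat -> R) (s m : nat) : R := sumR (fun n => Fh (u n)) (seq (S s) m).
Definition SW (u : nat -> R) (s m : nat) : R := sumR (swi u) (seq (S s) (pred m)).

Lemma swi_nonneg u n : 0 <= swi u n.
Proof. unfold swi. destruct (Req_EM_T _ _); lra. Qed.

Lemma SF_nonneg u s m : 0 <= SF u s m.
Proof. apply sumR_nonneg. auto. Qed.
Lemma SW_nonneg u s m : 0 <= SW u s m.
Proof. apply sumR_nonneg. intros; apply swi_nonneg. Qed.

Lemma SF_split u s a b : SF u s (a + b) = SF u s a + SF u (s + a) b.
Proof. unfold SF. rewrite seq_app, sumR_app. reflexivity. Qed.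

Lemma SF_mono u s i m : (i <= m)%nat -> SF u (s + i) (m - i) <= SF u s m.
Proof.
  intros H. replace m with (i + (m - i))%nat at 2 by lia. rewrite SF_split.
  pose proof (SF_nonneg u s i). lra.
Qed.

Lemma SW_mono u s i m : (i <= m)%nat -> SW u (s + i) (m - i) <= SW u s m.
Proof.
  intros H. unfold SW. destruct (Nat.eq_dec i m) as [->|Hne].
  - rewrite Nat.sub_diag. simpl. apply SW_nonneg.
  - replace (pred m) with (i + pred (m - i))%nat by lia. rewrite seq_app, sumR_app.
    replace (S s + i)%nat with (S (s + i)) by lia.
    pose proof (sumR_nonneg (swi u) (seq (S s) i) ltac:(intros; apply swi_nonneg)). lra.
Qed.

Lemma SW_split u s r m : (1 <= r)%nat -> (r < m)%nat ->
  SW u s m = SW u s r + swi u (s + r) + SW u (s + r) (m - r).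
Proof.
  intros H1 H2. unfold SW.
  replace (pred m) with (pred r + (1 + pred (m - r)))%nat by lia.
  rewrite !seq_app, !sumR_app.
  replace (S s + pred r)%nat with (s + r)%nat by lia.
  replace (s + r + 1)%nat with (S (s + r)) by lia. simpl. ring.
Qed.

Lemma SF_const u s r : (forall i, (1 <= i <= r)%nat -> u (s + i)%nat = u (S s)) -> SF u s r = INR r * Fh (u (S s)).
Proof.
  intros H. unfold SF. rewrite (sumR_ext_in _ (fun _ => Fh (u (S s)))).
  - set (v := Fh (u (S s))). clearbody v. clear H. generalize (S s). induction r; intros a; [simpl; lra|]. simpl sumR. rewrite IHr, S_INR. ring.
  - intros x Hx. apply in_seq in Hx. replace x with (s + (x - s))%nat by lia. rewrite H by lia. reflexivity.
Qed.

Lemma SW_const u s r : (forall i, (1 <= i <= r)%nat -> u (s + i)%nat = u (S s)) -> SW u s r = 0.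
Proof.
  intros H. unfold SW. rewrite (sumR_ext_in _ (fun _ => 0)); [apply sumR_const0|].
  intros x Hx. apply in_seq in Hx. unfold swi.
  assert (E1 : u (S x) = u (S s)) by (replace (S x) with (s + (S x - s))%nat by lia; apply H; lia).
  assert (E2 : u x = u (S s)) by (replace x with (s + (x - s))%nat by lia; apply H; lia).
  rewrite E1, E2. destruct (Req_EM_T _ _) as [|Hn]; [reflexivity|exfalso; apply Hn; reflexivity].
Qed.

Lemma S1_bound : forall r u g k B, 1 <= B -> (forall j, (1 <= j <= r)%nat -> Zc K u g k j <= B) ->
  S1 K u g k r <= (INR r + 1) * B.
Proof.
  induction r; intros u g k B HB H; [simpl; lra|].
  change (S1 K u g k (S r)) with (S1 K u g k r + Zc K u g k (S r)). rewrite S_INR. specialize (IHr u g k B HB ltac:(intros; apply H; lia)).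
  specialize (H (S r) ltac:(lia)). lra.
Qed.

Hypothesis HZup : forall x j, Zc K (fun _ => x) 0 0 j <= exp (INR j * Fh x).

Lemma Zc_run_const u s r : (forall i, (1 <= i <= r)%nat -> u (s + i)%nat = u (S s)) ->
  forall j, (j <= r)%nat -> Zc K u 0 s j = Zc K (fun _ => u (S s)) 0 0 j.
Proof. intros H j Hj. apply Zc_ext. intros i Hi. simpl. apply H. lia. Qed.

Theorem Zc_upper (u : nat -> R) (C D : R) (M : nat) :
  (forall i, exp (u i) <= C) -> 0 <= D -> (INR M + 1) * (INR M + 1) * C <= exp D ->
  forall m s, (m <= M)%nat -> Zc K u 0 s m <= exp (SF u s m + D * (1 + SW u s m)).
Proof.
  intros HC HD HDM m. induction m as [m IH] using (well_founded_induction Wf_nat.lt_wf). intros s Hm.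
  assert (HC0 : 0 < C) by (apply Rlt_le_trans with (exp (u 0%nat)); [apply exp_pos|auto]).
  destruct m as [|m'].
  - simpl. unfold SF, SW. simpl. rewrite Rplus_0_l, Rplus_0_r, Rmult_1_r.
    rewrite <- exp_0. apply exp_le_mono. lra.
  - set (m := S m') in *. set (r := run u s m).
    pose proof (run_bounds m u s ltac:(unfold m; lia)) as Hr. fold r in Hr.
    assert (Hc : forall i, (1 <= i <= r)%nat -> u (s + i)%nat = u (S s)) by (intros; apply (run_const m); auto).
    set (c := u (S s)) in *.
    assert (HSW0 : 0 <= SW u s m) by apply SW_nonneg.
    destruct (Nat.eq_dec r m) as [Erm|Erm].
    + rewrite (Zc_run_const u s r Hc m ltac:(lia)).
      rewrite (SF_const u s m) by (rewrite <- Erm; exact Hc).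
      eapply Rle_trans; [apply HZup|]. apply exp_le_mono. fold c.
      assert (0 <= D * (1 + SW u s m)) by (apply Rmult_le_pos; lra). lra.
    + assert (Hrm : (r < m)%nat) by lia.
      destruct (m - r)%nat as [|n] eqn:En; [lia|].
      replace m with (r + S n)%nat by lia.
      eapply Rle_trans; [apply Zc_split_upper; auto|].
      set (B' := exp (SF u (s + r) (S n) + D * (1 + SW u (s + r) (S n)))).
      assert (HT : Tz K u (s + r) (S n) <= INR (S n) * C * B').
      { apply Tz_bound; auto. intros i Hi.
        eapply Rle_trans; [apply IH; lia|]. unfold B'. apply exp_le_mono.
        replace (s + r + i)%nat with (s + r + i)%nat by lia.
        pose proof (SF_mono u (s + r) i (S n) ltac:(lia)).
        pose proof (SW_mono u (s + r) i (S n) ltac:(lia)). nra. }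
      assert (HS1 : S1 K u 0 s r <= (INR r + 1) * exp (INR r * Fh c)).
      { apply S1_bound.
        - rewrite <- exp_0. apply exp_le_mono. apply Rmult_le_pos; [apply pos_INR|auto].
        - intros j Hj. rewrite (Zc_run_const u s r Hc j ltac:(lia)). eapply Rle_trans; [apply HZup|].
          apply exp_le_mono. apply Rmult_le_compat_r; auto. apply le_INR; lia. }
      assert (Hsplit_F : SF u s (r + S n) = INR r * Fh c + SF u (s + r) (S n)).
      { rewrite SF_split, (SF_const u s r Hc). reflexivity. }
      assert (Hsplit_W : SW u s (r + S n) = 1 + SW u (s + r) (S n)).
      { rewrite (SW_split u s r (r + S n)) by lia. rewrite SW_const by exact Hc.
        assert (Hsw : swi u (s + r) = 1) by (apply run_switch; fold r; lia).
        rewrite Hsw. replace (r + S n - r)%nat with (S n) by lia. ring. }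
      rewrite Hsplit_F, Hsplit_W.
      assert (Hexp : exp (INR r * Fh c + SF u (s + r) (S n) + D * (1 + (1 + SW u (s + r) (S n))))
                     = exp (INR r * Fh c) * exp D * B').
      { unfold B'. rewrite <- !exp_plus. f_equal. ring. }
      rewrite Hexp.
      pose proof (S1_nonneg K K_nonneg r u 0 s). pose proof (Tz_nonneg K K_nonneg (S n) u (s + r)).
      assert (HB'0 : 0 < B') by apply exp_pos.
      assert (Hrr : INR r + 1 <= INR M + 1) by (apply Rplus_le_compat_r, le_INR; lia).
      assert (Hnn : INR (S n) <= INR M + 1) by (rewrite S_INR; apply Rplus_le_compat_r, le_INR; lia).
      assert (Hprod : (INR r + 1) * (INR (S n) * C) <= exp D).
      { eapply Rle_trans; [|apply HDM]. rewrite Rmult_assoc.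
        apply Rmult_le_compat; try lra.
        - pose proof (pos_INR r); lra.
        - apply Rmult_le_pos; [apply pos_INR|lra].
        - apply Rmult_le_compat_r; lra. }
      apply Rle_trans with (((INR r + 1) * exp (INR r * Fh c)) * (INR (S n) * C * B')).
      * apply Rmult_le_compat; auto.
      * pose proof (exp_pos (INR r * Fh c)).
        replace ((INR r + 1) * exp (INR r * Fh c) * (INR (S n) * C * B'))
          with (((INR r + 1) * (INR (S n) * C)) * (exp (INR r * Fh c) * B')) by ring.
        replace (exp (INR r * Fh c) * exp D * B') with (exp D * (exp (INR r * Fh c) * B')) by ring.
        apply Rmult_le_compat_r; [|auto]. apply Rmult_le_pos; lra.
Qed.

Theorem Zc_lower (u : nat -> R) (eps E : R) : 0 <= E ->
  (forall i l, INR l * (Fh (u i) - eps) - E <= ln (Zc K (fun _ => u i) 0 0 l)) ->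
  forall m s, exp (SF u s m - eps * INR m - E * (1 + SW u s m)) <= Zc K u 0 s m.
Proof.
  intros HE Hlow m. induction m as [m IH] using (well_founded_induction Wf_nat.lt_wf). intros s.
  destruct m as [|m'].
  - unfold SF, SW. simpl. apply Rle_trans with (exp 0); [apply exp_le_mono; rewrite Rmult_0_r; lra | rewrite exp_0; lra].
  - set (m := S m') in *. set (r := run u s m).
    pose proof (run_bounds m u s ltac:(unfold m; lia)) as Hr. fold r in Hr.
    assert (Hc : forall i, (1 <= i <= r)%nat -> u (s + i)%nat = u (S s)) by (intros; apply (run_const m); auto).
    set (c := u (S s)) in *.
    assert (HSW0 : 0 <= SW u s m) by apply SW_nonneg.
    assert (Hblk : exp (INR r * (Fh c - eps) - E) <= Zc K u 0 s r).
    { rewrite (Zc_run_const u s r Hc r ltac:(lia)).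
      apply Rle_trans with (exp (ln (Zc K (fun _ => c) 0 0 r))); [apply exp_le_mono; apply (Hlow (S s)) | rewrite exp_ln; [right; reflexivity|apply Zc_pos; auto]]. }
    destruct (Nat.eq_dec r m) as [Erm|Erm].
    + eapply Rle_trans; [|rewrite <- Erm; apply Hblk].
      apply exp_le_mono. rewrite (SF_const u s m) by (rewrite <- Erm; exact Hc). rewrite Erm. fold c.
      assert (0 <= E * SW u s m) by (apply Rmult_le_pos; lra). nra.
    + assert (Hrm : (r < m)%nat) by lia.
      destruct (m - r)%nat as [|n] eqn:En; [lia|].
      replace m with (r + S n)%nat by lia.
      eapply Rle_trans; [|apply Zc_concat; auto].
      assert (Hsplit_F : SF u s (r + S n) = INR r * Fh c + SF u (s + r) (S n)).
      { rewrite SF_split, (SF_const u s r Hc). reflexivity. }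
      assert (Hsplit_W : SW u s (r + S n) = 1 + SW u (s + r) (S n)).
      { rewrite (SW_split u s r (r + S n)) by lia. rewrite SW_const by exact Hc.
        assert (Hsw : swi u (s + r) = 1) by (apply run_switch; fold r; lia).
        rewrite Hsw. replace (r + S n - r)%nat with (S n) by lia. ring. }
      rewrite Hsplit_F, Hsplit_W.
      pose proof (IH (S n) ltac:(lia) (s + r)%nat) as H2.
      replace (exp (INR r * Fh c + SF u (s + r) (S n) - eps * INR (r + S n) - E * (1 + (1 + SW u (s + r) (S n)))))
        with (exp (INR r * (Fh c - eps) - E) * exp (SF u (s + r) (S n) - eps * INR (S n) - E * (1 + SW u (s + r) (S n)))).
      * apply Rmult_le_compat; auto; left; apply exp_pos.
      * rewrite <- exp_plus. f_equal. rewrite plus_INR. ring.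
Qed.
End Bounds.

Section MC.
Variable p : R.

Definition Ew (b0 : bool) (n : nat) (G : list bool -> R) : R :=
  sumR (fun l => path_weight p b0 l * G l) (bool_lists n).

Lemma Ew_S b0 n G : Ew b0 (S n) G =
  Qtrans p b0 true * Ew true n (fun l => G (true :: l)) + Qtrans p b0 false * Ew false n (fun l => G (false :: l)).
Proof.
  unfold Ew. rewrite sumR_bool_lists_S, <- !sumR_scal. f_equal; apply sumR_ext; intros; simpl; ring.
Qed.

Lemma Ew_plus b0 n G1 G2 : Ew b0 n (fun l => G1 l + G2 l) = Ew b0 n G1 + Ew b0 n G2.
Proof. unfold Ew. rewrite <- sumR_plus. apply sumR_ext; intros; ring. Qed.

Lemma Ew_scal b0 n c G : Ew b0 n (fun l => c * G l) = c * Ew b0 n G.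
Proof. unfold Ew. rewrite <- sumR_scal. apply sumR_ext; intros; ring. Qed.

Lemma Ew_const : forall n b0 c, Ew b0 n (fun _ => c) = c.
Proof.
  induction n; intros b0 c.
  - unfold Ew. simpl. ring.
  - rewrite Ew_S, !IHn. unfold Qtrans. destruct b0; simpl; ring.
Qed.

Hypothesis Hp : 0 <= p <= 1.

Lemma pw_nonneg : forall l b0, 0 <= path_weight p b0 l.
Proof.
  induction l; intros; simpl; [lra|]. apply Rmult_le_pos; auto.
  unfold Qtrans. destruct (Bool.eqb b0 a); lra.
Qed.

Lemma Ew_mono b0 n G1 G2 : (forall l, G1 l <= G2 l) -> Ew b0 n G1 <= Ew b0 n G2.
Proof. intros H. unfold Ew. apply sumR_le; intros. apply Rmult_le_compat_l; auto. apply pw_nonneg. Qed.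
End MC.

Lemma MC_E_Ew gamma N G : MC_E gamma N G =
  / 2 * Ew (flip_prob gamma N) true N (fun l => G (omega_of true l)) +
  / 2 * Ew (flip_prob gamma N) false N (fun l => G (omega_of false l)).
Proof.
  unfold MC_E, Ew. simpl. rewrite <- !sumR_scal. rewrite Rplus_0_r. f_equal; apply sumR_ext; intros; ring.
Qed.

Lemma Ew_sum_g p (g : R -> R) : forall n,
  Ew p true n (fun l => sumR (fun k => g (omega_of true l k)) (seq 1 n)) +
  Ew p false n (fun l => sumR (fun k => g (omega_of false l k)) (seq 1 n)) = INR n * (g 1 + g (-1)).
Proof.
  induction n.
  - unfold Ew. simpl. ring.
  - rewrite !Ew_S.
    assert (E : forall b0 b, Ew p b n (fun l => sumR (fun k => g (omega_of b0 (b :: l) k)) (seq 1 (S n)))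
                 = g (spin b) + Ew p b n (fun l => sumR (fun k => g (omega_of b l k)) (seq 1 n))).
    { intros b0 b. rewrite <- (Ew_const p n b (g (spin b))) at 1. rewrite <- Ew_plus.
      unfold Ew. apply sumR_ext. intros l. f_equal. simpl seq. simpl sumR. f_equal.
      rewrite sumR_seq_shift. reflexivity. }
    rewrite !E. rewrite S_INR. unfold Qtrans. simpl. simpl in IHn. 
    replace (Ew p true n (fun l : list bool => sumR (fun k : nat => g (omega_of true l k)) (seq 1 n)))
      with (INR n * (g 1 + g (-1)) - Ew p false n (fun l : list bool => sumR (fun k : nat => g (omega_of false l k)) (seq 1 n))) by lra.
    ring.
Qed.

Lemma Ew_switch p : forall n b0,
  Ew p b0 n (fun l => sumR (fun k => swi (omega_of b0 l) k) (seq 0 n)) = INR n * p.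
Proof.
  induction n; intros b0.
  - unfold Ew. simpl. ring.
  - rewrite Ew_S.
    assert (E : forall b, Ew p b n (fun l => sumR (fun k => swi (omega_of b0 (b :: l)) k) (seq 0 (S n)))
                 = swi (omega_of b0 [b]) 0 + Ew p b n (fun l => sumR (fun k => swi (omega_of b l) k) (seq 0 n))).
    { intros b. rewrite <- (Ew_const p n b (swi (omega_of b0 [b]) 0)) at 1. rewrite <- Ew_plus.
      unfold Ew. apply sumR_ext. intros l. f_equal. simpl seq. simpl sumR. f_equal.
      rewrite sumR_seq_shift. reflexivity. }
    rewrite !E, !IHn. rewrite S_INR. unfold Qtrans, swi, omega_of, spin. simpl.
    destruct b0; simpl;
    repeat match goal with |- context [Req_EM_T ?a ?b] => destruct (Req_EM_T a b); try lra end; ring.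
Qed.

Lemma ln_le_self y : 0 < y -> ln y <= y.
Proof. intros H. pose proof (exp_ineq1_le (ln y)). rewrite exp_ln in H0 by lra. lra. Qed.

Lemma Rpower_small d t : 0 < d -> 0 < t -> exists N1, forall N, (N1 <= N)%nat -> Rpower (INR N) (- d) < t.
Proof.
  intros Hd Ht. destruct (INR_unbounded (exp (- ln t / d))) as [N1 HN1].
  exists N1. intros N HN. assert (INR N1 <= INR N) by (apply le_INR; lia).
  assert (HNp : 0 < INR N) by (pose proof (exp_pos (- ln t / d)); lra).
  unfold Rpower. rewrite <- (exp_ln t) by lra. apply exp_increasing.
  assert (ln (exp (- ln t / d)) < ln (INR N)) by (apply ln_increasing; [apply exp_pos|lra]).
  rewrite ln_exp in H0.
  apply Rmult_lt_compat_l with (r := d) in H0; [|lra].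
  replace (d * (- ln t / d)) with (- ln t) in H0 by (field; lra). lra.
Qed.

Lemma decay gamma a eta : 0 < gamma -> 0 <= a -> 0 < eta ->
  exists N1, forall N, (N1 <= N)%nat -> (a + 2 * ln (INR N + 1)) * Rpower (INR N) (- gamma) < eta.
Proof.
  intros Hg Ha He.
  destruct (Rpower_small gamma (eta / 2 / (a + 2 * ln 2 + 1))) as [N1 H1]; auto.
  { apply Rdiv_lt_0_compat; [lra|]. pose proof ln_lt_2. lra. }
  destruct (Rpower_small (gamma / 2) (eta / 2 / (4 / gamma + 1))) as [N2 H2]; [lra| |].
  { apply Rdiv_lt_0_compat; [lra|]. assert (0 < 4 / gamma) by (apply Rdiv_lt_0_compat; lra). lra. }
  exists (Nat.max 1 (Nat.max N1 N2)). intros N HN.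
  specialize (H1 N ltac:(lia)). specialize (H2 N ltac:(lia)).
  assert (HN1 : 1 <= INR N) by (replace 1 with (INR 1) by reflexivity; apply le_INR; lia).
  set (x := INR N) in *.
  assert (Hl2 : 0 < ln 2) by (pose proof ln_lt_2; lra).
  assert (Hlnx1 : ln (x + 1) <= ln 2 + ln x).
  { rewrite <- ln_mult by lra. apply ln_le_mono; lra. }
  assert (Hlnx : ln x <= 2 / gamma * Rpower x (gamma / 2)).
  { assert (ln x = 2 / gamma * ln (Rpower x (gamma / 2))) by (rewrite ln_Rpower; field; lra).
    rewrite H. apply Rmult_le_compat_l; [apply Rlt_le, Rdiv_lt_0_compat; lra|].
    apply ln_le_self. unfold Rpower; apply exp_pos. }
  set (P := Rpower x (- gamma)) in *. assert (HP : 0 < P) by (unfold P, Rpower; apply exp_pos).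
  assert (HPh : Rpower x (gamma / 2) * P = Rpower x (- (gamma / 2))).
  { unfold P. rewrite <- Rpower_plus. f_equal. field. }
  assert (Hln0 : 0 <= ln x) by (rewrite <- ln_1; apply ln_le_mono; lra).
  apply Rle_lt_trans with ((a + 2 * ln 2) * P + 4 / gamma * Rpower x (- (gamma / 2))).
  - rewrite <- HPh.
    apply Rle_trans with ((a + 2 * ln 2 + 2 * (2 / gamma * Rpower x (gamma / 2))) * P).
    + apply Rmult_le_compat_r; lra.
    + right. field. lra.
  - assert (HPa : (a + 2 * ln 2) * P <= eta / 2 * ((a + 2 * ln 2) / (a + 2 * ln 2 + 1))).
    { apply Rle_trans with ((a + 2 * ln 2) * (eta / 2 / (a + 2 * ln 2 + 1))); [apply Rmult_le_compat_l; lra|].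
      right. field. lra. }
    assert (HPb : 4 / gamma * Rpower x (- (gamma / 2)) <= eta / 2 * ((4/gamma) / (4 / gamma + 1))).
    { assert (0 < 4 / gamma) by (apply Rdiv_lt_0_compat; lra).
      apply Rle_trans with (4 / gamma * (eta / 2 / (4 / gamma + 1))); [apply Rmult_le_compat_l; lra|].
      right. field. lra. }
    assert ((a + 2 * ln 2) / (a + 2 * ln 2 + 1) < 1).
    { apply Rmult_lt_reg_r with (a + 2 * ln 2 + 1); [lra|]. unfold Rdiv. rewrite Rmult_assoc, Rinv_l; lra. }
    assert ((4/gamma) / (4 / gamma + 1) < 1).
    { assert (0 < 4 / gamma) by (apply Rdiv_lt_0_compat; lra).
      apply Rmult_lt_reg_r with (4/gamma + 1); [lra|]. unfold Rdiv at 1. rewrite Rmult_assoc, Rinv_l; lra. }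
    nra.
Qed.

Lemma omega_spin b0 l n : omega_of b0 l n = 1 \/ omega_of b0 l n = -1.
Proof. unfold omega_of, spin. destruct (nth n (b0 :: l) false); auto. Qed.

Lemma swi_le beta h (w : nat -> R) n : swi (fun n => beta * w n + h) n <= swi w n.
Proof.
  unfold swi. destruct (Req_EM_T (w (S n)) (w n)) as [E|E].
  - rewrite E. destruct (Req_EM_T _ _) as [|H]; [lra|exfalso; apply H; reflexivity].
  - destruct (Req_EM_T _ _); lra.
Qed.

Lemma SW_le beta h (w : nat -> R) N :
  SW (fun n => beta * w n + h) 0 N <= sumR (swi w) (seq 0 N).
Proof.
  unfold SW. destruct N; [simpl; lra|]. simpl pred. change (seq 0 (S N)) with (0%nat :: seq 1 N).
  simpl sumR at 2. pose proof (swi_nonneg w 0).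
  assert (sumR (swi (fun n => beta * w n + h)) (seq 1 N) <= sumR (swi w) (seq 1 N)).
  { apply sumR_le. intros; apply swi_le. }
  lra.
Qed.

Lemma Ew_affine p b0 N a b c X Y :
  Ew p b0 N (fun l => a * X l + b * Y l + c) = a * Ew p b0 N X + b * Ew p b0 N Y + c.
Proof.
  pose proof (Ew_const p N b0 c) as Hc. unfold Ew in *.
  transitivity (a * sumR (fun l => path_weight p b0 l * X l) (bool_lists N) + b * sumR (fun l => path_weight p b0 l * Y l) (bool_lists N) + sumR (fun l => path_weight p b0 l * c) (bool_lists N)); [|rewrite Hc; reflexivity].
  rewrite <- !sumR_scal, <- !sumR_plus. apply sumR_ext; intros; ring.
Qed.

Lemma MC_affine gamma N a b c G1 G2 :
  MC_E gamma N (fun w => a * G1 w + b * G2 w + c) = a * MC_E gamma N G1 + b * MC_E gamma N G2 + c.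
Proof.
  rewrite !MC_E_Ew.
  rewrite (Ew_affine _ true N a b c (fun l => G1 (omega_of true l)) (fun l => G2 (omega_of true l))).
  rewrite (Ew_affine _ false N a b c (fun l => G1 (omega_of false l)) (fun l => G2 (omega_of false l))).
  field.
Qed.

Lemma MC_mono gamma N G1 G2 : 0 <= flip_prob gamma N <= 1 ->
  (forall b0 l, G1 (omega_of b0 l) <= G2 (omega_of b0 l)) -> MC_E gamma N G1 <= MC_E gamma N G2.
Proof.
  intros Hp H. rewrite !MC_E_Ew.
  pose proof (Ew_mono _ Hp true N _ _ (fun l => H true l)).
  pose proof (Ew_mono _ Hp false N _ _ (fun l => H false l)). lra.
Qed.

Theorem mainTheorem4 (gamma alpha : R) (L : nat -> R) (Fh : R -> R) (beta h : R) :
  0 < gamma < 1 ->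
  0 <= alpha ->
  (forall n : nat, (1 <= n)%nat -> 0 < L n) ->
  slowly_varying L ->
  infinite_sum (fun n => Kren alpha L (S n)) 1 ->
  (forall x : R, Un_cv (fun N => / INR N * ln (Zhom (Kren alpha L) x N)) (Fh x)) ->
  0 <= beta ->
  Un_cv (fun N => MC_E gamma N
                    (fun omega => / INR N * ln (Zpf (Kren alpha L) beta h omega N)))
        (F_beta_h Fh beta h).
Proof.
  intros Hg Ha HL Hsv Hsum HF Hb.
  pose proof (Kren_nonneg alpha L HL) as K_nonneg.
  pose proof (Kren_le1 alpha L HL Hsum) as K_le1.
  assert (K1_pos : 0 < Kren alpha L 1) by (rewrite Kren_1; apply HL; lia).
  pose proof (Rt_Kren_nonneg alpha L HL Hsum) as HRt.
  set (K := Kren alpha L) in *.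
  assert (HF' : forall x, Un_cv (fun N => / INR N * ln (Zc K (fun _ => x) 0 0 N)) (Fh x)).
  { intros x e He. destruct (HF x e He) as [N0 HN]. exists N0. intros n Hn. rewrite <- Zhom_Zc. apply HN; auto. }
  assert (HF0 : forall x, 0 <= Fh x) by exact (F_nonneg alpha L Fh Ha HL Hsv HF').
  assert (Fz : forall x, x <= 0 -> Fh x = 0).
  { intros x Hx. pose proof (F_nonpos K Fh K_nonneg K1_pos HRt HF' x Hx). pose proof (HF0 x). lra. }
  pose proof (Zh_upper K Fh K_nonneg K1_pos HF') as HZup.
  set (Phi := (Fh (h + beta) + Fh (h - beta)) / 2).
  replace (F_beta_h Fh beta h) with Phi.
  2: { unfold F_beta_h, Phi. destruct (Rle_dec h (- beta)).
       - rewrite !Fz by lra. field.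
       - destruct (Rlt_dec h beta); [rewrite (Fz (h - beta)) by lra; field|reflexivity]. }
  intros eta Heta.
  set (eps := eta / 4).
  destruct (Zh_lower_eps K Fh K_nonneg K1_pos HF' (h + beta) eps ltac:(unfold eps; lra)) as [E1 [HE1 HL1]].
  destruct (Zh_lower_eps K Fh K_nonneg K1_pos HF' (h - beta) eps ltac:(unfold eps; lra)) as [E2 [HE2 HL2]].
  set (E := Rmax E1 E2).
  assert (HE1' : E1 <= E) by apply Rmax_l. assert (HE2' : E2 <= E) by apply Rmax_r.
  set (Cb := Rabs h + beta).
  assert (HCb : 0 <= Cb) by (unfold Cb; pose proof (Rabs_pos h); lra).
  destruct (decay gamma (E + Cb) (eta / 8) ltac:(lra) ltac:(lra) ltac:(lra)) as [N1 HN1].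
  exists (Nat.max N1 1). intros N HN. specialize (HN1 N ltac:(lia)).
  assert (HNpos : 0 < INR N) by (apply lt_0_INR; lia).
  assert (HN1r : 1 <= INR N) by (replace 1 with (INR 1) by reflexivity; apply le_INR; lia).
  set (p := flip_prob gamma N).
  assert (Hp : 0 <= p <= 1).
  { unfold p, flip_prob. split; [left; unfold Rpower; apply exp_pos|].
    rewrite <- (Rpower_O (INR N)) by lra. apply Rle_Rpower; lra. }
  assert (Hinvp : / INR N <= p).
  { unfold p, flip_prob. rewrite <- (Rpower_1 (INR N)) at 1 by lra. rewrite <- Rpower_Ropp.
    apply Rle_Rpower; lra. }
  change (Rpower (INR N) (- gamma)) with p in HN1.
  set (D := 2 * ln (INR N + 1) + Cb).
  assert (Hln1 : 0 <= ln (INR N + 1)) by (rewrite <- ln_1; apply ln_le_mono; lra).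
  assert (HD : 0 <= D) by (unfold D; lra).
  assert (HDexp : (INR N + 1) * (INR N + 1) * exp Cb <= exp D).
  { unfold D. rewrite exp_plus. replace (2 * ln (INR N + 1)) with (ln (INR N + 1) + ln (INR N + 1)) by ring.
    rewrite exp_plus, exp_ln by lra. lra. }
  set (A := fun w : nat -> R => sumR (fun n => Fh (beta * w n + h)) (seq 1 N)).
  set (S := fun w : nat -> R => sumR (swi w) (seq 0 N)).
  assert (Hpt : forall b0 l,
    / INR N * A (omega_of b0 l) + (- (E * / INR N)) * S (omega_of b0 l) + (- eps - E * / INR N)
      <= / INR N * ln (Zpf K beta h (omega_of b0 l) N)
    /\ / INR N * ln (Zpf K beta h (omega_of b0 l) N)
      <= / INR N * A (omega_of b0 l) + (D * / INR N) * S (omega_of b0 l) + D * / INR N).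
  { intros b0 l. set (w := omega_of b0 l).
    assert (Hw : forall n, w n = 1 \/ w n = -1) by (intros; apply omega_spin).
    rewrite Zpf_Zc. set (u := fun n => beta * w n + h).
    assert (HSW : SW u 0 N <= S w) by apply SW_le.
    assert (HSW0 : 0 <= SW u 0 N) by apply SW_nonneg.
    assert (HZpos : 0 < Zc K u 0 0 N) by (apply Zc_pos; auto).
    split.
    - assert (Hlow : forall i l0, INR l0 * (Fh (u i) - eps) - E <= ln (Zc K (fun _ => u i) 0 0 l0)).
      { intros i l0. unfold u. destruct (Hw i) as [Ei|Ei]; rewrite Ei.
        - replace (beta * 1 + h) with (h + beta) by ring. pose proof (HL1 l0). lra.
        - replace (beta * -1 + h) with (h - beta) by ring. pose proof (HL2 l0). lra. }
      pose proof (Zc_lower K Fh K_nonneg K1_pos u eps E (Rle_trans _ _ _ HE1 HE1') Hlow N 0) as H.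
      apply ln_le_mono in H; [|apply exp_pos]. rewrite ln_exp in H.
      change (SF Fh u 0 N) with (A w) in H.
      apply Rle_trans with (/ INR N * (A w - eps * INR N - E * (1 + SW u 0 N))).
      + assert (0 <= E) by exact (Rle_trans _ _ _ HE1 HE1').
        assert (E * SW u 0 N <= E * S w) by (apply Rmult_le_compat_l; auto).
        apply Rle_trans with (/ INR N * (A w - eps * INR N - E * (1 + S w))).
        * right. field. lra.
        * apply Rmult_le_compat_l; [left; apply Rinv_0_lt_compat; lra|]. lra.
      + apply Rmult_le_compat_l; [left; apply Rinv_0_lt_compat; lra|]. exact H.
    - assert (HC : forall i, exp (u i) <= exp Cb).
      { intros i. apply exp_le_mono. unfold u, Cb. destruct (Hw i) as [Ei|Ei]; rewrite Ei;
        pose proof (Rle_abs h); pose proof (Rle_abs (-h)); rewrite Rabs_Ropp in *; lra. }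
      pose proof (Zc_upper K Fh K_nonneg K_le1 HF0 HZup u (exp Cb) D N HC HD HDexp N 0 ltac:(lia)) as H.
      apply ln_le_mono in H; [|exact HZpos]. rewrite ln_exp in H.
      change (SF Fh u 0 N) with (A w) in H.
      apply Rle_trans with (/ INR N * (A w + D * (1 + SW u 0 N))).
      + apply Rmult_le_compat_l; [left; apply Rinv_0_lt_compat; lra|]. exact H.
      + assert (D * SW u 0 N <= D * S w) by (apply Rmult_le_compat_l; auto).
        apply Rle_trans with (/ INR N * (A w + D * (1 + S w))).
        * apply Rmult_le_compat_l; [left; apply Rinv_0_lt_compat; lra|]. lra.
        * right. field. lra. }
  assert (HA : MC_E gamma N A = INR N * Phi).
  { rewrite MC_E_Ew. fold p. unfold A.
    pose proof (Ew_sum_g p (fun y => Fh (beta * y + h)) N) as H. cbv beta in H.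
    rewrite <- Rmult_plus_distr_l. rewrite H.
    replace (beta * 1 + h) with (h + beta) by ring. replace (beta * -1 + h) with (h - beta) by ring.
    unfold Phi. field. }
  assert (HS : MC_E gamma N S = INR N * p).
  { rewrite MC_E_Ew. fold p. unfold S. rewrite !Ew_switch. field. }
  assert (Hlo := MC_mono gamma N (fun w => / INR N * A w + (- (E * / INR N)) * S w + (- eps - E * / INR N)) (fun w => / INR N * ln (Zpf K beta h w N)) Hp (fun b0 l => proj1 (Hpt b0 l))).
  assert (Hhi := MC_mono gamma N (fun w => / INR N * ln (Zpf K beta h w N)) (fun w => / INR N * A w + (D * / INR N) * S w + D * / INR N) Hp (fun b0 l => proj2 (Hpt b0 l))).
  rewrite MC_affine in Hlo, Hhi. rewrite HA, HS in Hlo, Hhi.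
  replace (/ INR N * (INR N * Phi)) with Phi in Hlo, Hhi by (field; lra).
  replace (- (E * / INR N) * (INR N * p)) with (- (E * p)) in Hlo by (field; lra).
  replace (D * / INR N * (INR N * p)) with (D * p) in Hhi by (field; lra).
  assert (HE0 : 0 <= E) by exact (Rle_trans _ _ _ HE1 HE1').
  assert (HEp : E * p <= (E + Cb + 2 * ln (INR N + 1)) * p) by (apply Rmult_le_compat_r; lra).
  assert (HDp : D * p <= (E + Cb + 2 * ln (INR N + 1)) * p) by (apply Rmult_le_compat_r; unfold D; lra).
  assert (HEn : E * / INR N <= E * p) by (apply Rmult_le_compat_l; auto).
  assert (HDn : D * / INR N <= D * p) by (apply Rmult_le_compat_l; auto).
  replace (E + Cb + 2 * ln (INR N + 1)) with (E + Cb + 2 * ln (INR N + 1)) in * by reflexivity.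
  assert (Hdec : (E + Cb + 2 * ln (INR N + 1)) * p < eta / 8) by exact HN1.
  unfold Rdist. apply Rabs_def1; unfold eps in *; lra.
Qed.
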